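(* For every $n$ there exists a bipartite graph $G$ with $O(n)$ vertices and $O(n)$ edges such that the induced matching polytope of $G$ has extension complexity $2^{\Omega(\sqrt[4]{n})}$.
   Context: A matching in a graph $G=(V,E)$ is a set of pairwise vertex-disjoint edges; it is induced if no edge of $G$ joins two distinct edges of the matching. The induced matching polytope of $G$ is the convex hull of the 0/1 incidence vectors in $\mathbb{R}^E$ of all induced matchings of $G$. The extension complexity $\mathrm{xc}(Q)$ of a polytope $Q$ is the minimum number of facets of a polytope $Q'$ such that $Q$ is a linear image of $Q'$. *)

(* Defs.v *)
From HB Require Import structures.
From mathcomp Require Import all_boot all_order all_algebra.
Set Implicit Arguments. Unset Strict Implicit. Unset Printing Implicit Defensive.
Import Order.TTheory GRing.Theory Num.Theory.
Local Open Scope ring_scope.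

(* A simple graph on vertex set V is a symmetric irreflexive relation e. *)
Definition edge_of (V : finType) (e : rel V) (A : {set V}) : bool :=
  [exists x, exists y, e x y && (A == [set x; y])].

Definition edge_t (V : finType) (e : rel V) := {A : {set V} | edge_of e A}.

Definition bipartite (V : finType) (e : rel V) : Prop :=
  exists f : V -> bool, forall x y, e x y -> f x != f y.

Definition induced_matching (V : finType) (e : rel V) (M : {set edge_t e}) : bool :=
  [forall a in M, forall b in M, (a != b) ==>
     ([disjoint val a & val b] &&
      [forall x in val a, forall y in val b, ~~ e x y])].

Section Geometry.
Variable R : realFieldType.

Definition lin (D : finType) (a x : D -> R) : R := \sum_d a d * x d.

Definition in_conv (D I : finType) (P : pred I) (v : I -> D -> R) (x : D -> R) : Prop :=
  exists w : I -> R,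
    [/\ forall i, 0 <= w i, forall i, ~~ P i -> w i = 0,
        \sum_i w i = 1 & forall d, x d = \sum_i w i * v i d].

Definition aff_indep (D : finType) (m : nat) (p : 'I_m -> D -> R) : Prop :=
  forall lam : 'I_m -> R, \sum_i lam i = 0 ->
    (forall d, \sum_i lam i * p i d = 0) -> forall i, lam i = 0.

Definition has_aff_indep (D : finType) (S : (D -> R) -> Prop) (m : nat) : Prop :=
  exists p : 'I_m -> D -> R, (forall i, S (p i)) /\ aff_indep p.

(* affrank S r : the maximal number of affinely independent points of S is r,
   i.e. dim (aff hull S) = r - 1 (with dim of the empty set = -1). *)
Definition affrank (D : finType) (S : (D -> R) -> Prop) (r : nat) : Prop :=
  has_aff_indep S r /\ ~ has_aff_indep S r.+1.

Definition is_face (D : finType) (P F : (D -> R) -> Prop) : Prop :=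
  exists (a : D -> R) (b : R),
    (forall x, P x -> lin a x <= b) /\ (forall x, F x <-> (P x /\ lin a x = b)).

Definition is_facet (D : finType) (P F : (D -> R) -> Prop) : Prop :=
  is_face P F /\ exists r, affrank P r.+1 /\ affrank F r.

(* xc_ge Q N : the extension complexity of Q is at least N, i.e. every
   polytope Q' (convex hull of finitely many points in some R^k) having Q as
   a linear image has at least N facets (every list of sets containing all
   facets of Q' has length >= N). *)
Definition xc_ge (D : finType) (Q : (D -> R) -> Prop) (N : nat) : Prop :=
  forall (k m : nat) (p : 'I_m -> 'I_k -> R) (c : D -> 'I_k -> R)
         (L : seq (('I_k -> R) -> Prop)),
    (forall x, Q x <-> exists y, in_conv predT p y /\
                                 forall d, x d = \sum_j c d j * y j) ->
    (forall F, is_facet (in_conv predT p) F ->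
       exists i, (i < size L)%N /\ forall y, F y <-> nth (fun _ => False) L i y) ->
    (N <= size L)%N.

Definition induced_matching_polytope (V : finType) (e : rel V) :
    (edge_t e -> R) -> Prop :=
  in_conv (induced_matching (e := e))
          (fun (M : {set edge_t e}) (eps : edge_t e) => if eps \in M then 1 else 0).

End Geometry.

(* Main.v *)
Require Import Defs.
From HB Require Import structures.
From mathcomp Require Import all_boot all_order all_algebra.
Import Order.TTheory GRing.Theory Num.Theory.
Local Open Scope ring_scope.

From mathcomp Require Import zify.
Set Implicit Arguments. Unset Strict Implicit. Unset Printing Implicit Defensive.
Local Close Scope ring_scope.

Section KWs.
Variable T : finType.
Implicit Types (a b : {set T}) (A B : pred {set T}).

Definition Dc (A B : pred {set T}) : nat :=
  \sum_(a : {set T}) \sum_(b : {set T}) (A a && B b && [disjoint a & b]).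

Lemma sum_split_x (x : T) (F : {set T} -> nat) :
  \sum_(a : {set T}) F a = \sum_(a : {set T} | x \notin a) F a + \sum_(a : {set T} | x \notin a) F (x |: a).
Proof.
rewrite (bigID (fun a : {set T} => x \notin a)) /=; congr (_ + _).
rewrite (reindex_onto (fun a : {set T} => x |: a) (fun a : {set T} => a :\ x)) /=.
  apply: eq_bigl => a; rewrite setU11 /=.
  apply/idP/idP => [/eqP <-|xa]; first by rewrite setD11.
  by apply/eqP; apply/setP => y; rewrite !inE; case: eqP => // ->; rewrite (negPf xa).
by move=> a /negPn xa; rewrite setD1K.
Qed.

Lemma Dc_restr (x : T) A B : (forall a, A a -> x \notin a) -> (forall b, B b -> x \notin b) ->
  Dc A B = \sum_(a : {set T} | x \notin a) \sum_(b : {set T} | x \notin b) (A a && B b && [disjoint a & b]).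
Proof.
move=> HA HB; rewrite /Dc (sum_split_x x) [X in _ + X]big1 ?addn0; last first.
  move=> a _; apply: big1 => b _; case Aa: (A _) => //=.
  by move: (HA _ Aa); rewrite setU11.
apply: eq_bigr => a _; rewrite (sum_split_x x) [X in _ + X]big1 ?addn0 //.
move=> b _; case Bb: (B _); rewrite ?andbF //.
by move: (HB _ Bb); rewrite setU11.
Qed.

Lemma disjP a b : reflect (forall y, y \in a -> y \in b -> False) [disjoint a & b].
Proof.
rewrite -setI_eq0; apply: (iffP eqP) => [H y ya yb|H].
  by have := in_set0 y; rewrite -H inE ya yb.
by apply/setP => y; rewrite !inE; apply/negP => /andP[ya yb]; exact: H ya yb.
Qed.

Lemma disjU1l (x : T) a b : x \notin b -> [disjoint x |: a & b] = [disjoint a & b].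
Proof.
move=> xb; apply/disjP/disjP => H y.
  by move=> ya; apply: H; rewrite inE ya orbT.
by rewrite !inE => /orP[/eqP ->|]; [rewrite (negPf xb)|apply: H].
Qed.

Lemma Dc_decomp (x : T) A B :
  Dc A B = Dc (fun a => A a && (x \notin a)) (fun b => B b && (x \notin b))
         + Dc (fun a => (x \notin a) && A (x |: a)) (fun b => B b && (x \notin b))
         + Dc (fun a => A a && (x \notin a)) (fun b => (x \notin b) && B (x |: b)).
Proof.
rewrite {1}/Dc !(@Dc_restr x); try by move=> ? /andP[].
rewrite (sum_split_x x).
under eq_bigr => a _ do rewrite (sum_split_x x).
under [X in _ + X = _]eq_bigr => a _ do rewrite (sum_split_x x).
rewrite -!big_split /=; apply: eq_bigr => a xa.
rewrite -!big_split /=; apply: eq_bigr => b xb.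
rewrite xa xb !andbT /= (@disjU1l x a b xb).
have -> : A (x |: a) && B (x |: b) && [disjoint x |: a & x |: b] = false.
  apply/negbTE; rewrite negb_and; apply/orP; right.
  by apply/negP => /disjP /(_ x); rewrite !setU11 => /(_ isT isT).
rewrite addn0 [[disjoint a & x |: b]]disjoint_sym (@disjU1l x b a xa) disjoint_sym.
by rewrite addnAC.
Qed.


Lemma Dc_le A B A' B' (f : {set T} -> {set T} -> nat) :
  (forall a b, (A a && B b && [disjoint a & b]) + f a b <= A' a && B' b && [disjoint a & b]) ->
  Dc A B + \sum_(a : {set T}) \sum_(b : {set T}) f a b <= Dc A' B'.
Proof.
move=> H; rewrite /Dc -big_split /=; apply: leq_sum => a _.
rewrite -big_split /=; apply: leq_sum => b _; exact: H.
Qed.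

Lemma Dc_eq A B A' B' : A =1 A' -> B =1 B' -> Dc A B = Dc A' B'.
Proof.
move=> HA HB; rewrite /Dc; apply: eq_bigr => a _; apply: eq_bigr => b _.
by rewrite HA HB.
Qed.

Lemma Dc_union A A' B :
  Dc A B + Dc A' B = Dc (fun a => A a || A' a) B + Dc (fun a => A a && A' a) B.
Proof.
rewrite /Dc -!big_split /=; apply: eq_bigr => a _.
rewrite -!big_split /=; apply: eq_bigr => b _.
by case: (A a); case: (A' a); case: (B b); case: [disjoint a & b].
Qed.

Lemma setIU1l (x : T) a b : x \notin b -> (x |: a) :&: b = a :&: b.
Proof.
move=> xb; apply/setP => y; rewrite !inE.
by case: eqP => [->|] //=; rewrite (negPf xb) andbF.
Qed.

Lemma Dc_set0 A B : (forall a, A a -> a = set0) -> (forall b, B b -> b = set0) -> Dc A B <= 1.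
Proof.
move=> HA HB; rewrite /Dc (bigD1 set0) //= [X in _ + X]big1 ?addn0; last first.
  move=> a /negPf na; apply: big1 => b _.
  by case Aa: (A a) => //; move: na; rewrite (HA _ Aa) eqxx.
rewrite (bigD1 set0) //= [X in _ + X]big1 ?addn0; first by case: (_ && _).
move=> b /negPf nb; case Bb: (B b); rewrite ?andbF //.
by move: nb; rewrite (HB _ Bb) eqxx.
Qed.

Lemma KW_bound n : forall (S : {set T}) A B, #|S| = n ->
  (forall a, A a -> a \subset S) -> (forall b, B b -> b \subset S) ->
  (forall a b, A a -> B b -> #|a :&: b| != 1%N) -> Dc A B <= 2 ^ n.
Proof.
elim: n => [|n IH] S A B cS HA HB Hab.
  move/eqP: cS; rewrite cards_eq0 => /eqP S0.
  apply: Dc_set0 => [a /HA|b /HB]; rewrite S0 subset0 => /eqP //.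
have [x xS] : exists x, x \in S.
  by apply/set0Pn; rewrite -card_gt0 cS.
have cS' : #|S :\ x| = n by move: (cardsD1 x S); rewrite xS cS add1n => -[].
rewrite (Dc_decomp x).
set A0 := fun a => A a && (x \notin a).
set A1 := fun a => (x \notin a) && A (x |: a).
set B0 := fun b => B b && (x \notin b).
set B1 := fun b => (x \notin b) && B (x |: b).
rewrite Dc_union -addnA.
have H1 : Dc (fun a => A0 a || A1 a) B0 <= 2 ^ n.
  apply: (IH (S :\ x)) => //.
  - move=> a /orP[/andP[/HA aS xa]|/andP[xa /HA aS]]; rewrite subsetD1 xa andbT //.
    by apply: subset_trans aS; apply: subsetUr.
  - by move=> b /andP[/HB bS xb]; rewrite subsetD1 xb bS.
  move=> a b /orP[/andP[Aa _]|/andP[xa Aa]] /andP[Bb xb]; first exact: Hab.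
  by rewrite -(setIU1l a xb); apply: Hab.
have H2 : Dc (fun a => A0 a && A1 a) B0 + Dc A0 B1 <= Dc A0 (fun b => B0 b || B1 b).
  rewrite [X in _ + X <= _]/Dc; apply: Dc_le => a b.
  rewrite /A0 /A1 /B0 /B1.
  case xa: (x \in a); rewrite ?andbF ?andFb //=.
  case xb: (x \in b); rewrite ?andbF ?andbT //=.
  case Aa: (A a); case Axa: (A (x |: a)); case Bb: (B b); case Bxb: (B (x |: b));
    case d: [disjoint a & b] => //=.
  exfalso; move: (Hab _ _ Axa Bxb).
  have -> : (x |: a) :&: (x |: b) = [set x].
    apply/setP => y; rewrite !inE; case: eqP => //= _.
    by apply/negbTE/andP => -[ya yb]; move/disjP: d => /(_ y ya yb).
  by rewrite cards1.
have H3 : Dc A0 (fun b => B0 b || B1 b) <= 2 ^ n.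
  apply: (IH (S :\ x)) => //.
  - by move=> a /andP[/HA aS xa]; rewrite subsetD1 xa aS.
  - move=> b /orP[/andP[/HB bS xb]|/andP[xb /HB bS]]; rewrite subsetD1 xb andbT //.
    by apply: subset_trans bS; apply: subsetUr.
  move=> a b /andP[Aa xa] /orP[/andP[Bb _]|/andP[xb Bb]]; first exact: Hab.
  by rewrite setIC -(setIU1l b xa) setIC; apply: Hab.
rewrite expnS mul2n -addnn.
apply: leq_add => //; exact: leq_trans H2 H3.
Qed.

Lemma Dc_full n : forall S : {set T}, #|S| = n ->
  Dc (fun a => a \subset S) (fun b => b \subset S) = 3 ^ n.
Proof.
elim: n => [|n IH] S cS.
  move/eqP: cS; rewrite cards_eq0 => /eqP ->.
  rewrite /Dc (bigD1 set0) ?sub0set //= [X in _ + X]big1 ?addn0; last first.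
    move=> a /negPf na; apply: big1 => b _.
    by rewrite subset0 na.
  rewrite (bigD1 set0) ?sub0set //= [X in _ + X]big1 ?addn0.
    by rewrite -setI_eq0 setI0 eqxx.
  by move=> b /negPf nb; rewrite subset0 nb.
have [x xS] : exists x, x \in S.
  by apply/set0Pn; rewrite -card_gt0 cS.
have cS' : #|S :\ x| = n by move: (cardsD1 x S); rewrite xS cS add1n => -[].
have E0 : forall a : {set T}, (a \subset S) && (x \notin a) = (a \subset S :\ x).
  by move=> a; rewrite subsetD1.
have E1 : forall a : {set T}, (x \notin a) && (x |: a \subset S) = (a \subset S :\ x).
  by move=> a; rewrite subsetD1 subUset sub1set xS andbC.
rewrite (Dc_decomp x) !(Dc_eq (A' := fun a => a \subset S :\ x) (B' := fun a => a \subset S :\ x)) //.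
by rewrite IH // expnS mulSn mul2n -addnn addnA.
Qed.

End KWs.

Section Graph.
Variable m0 : nat.
Definition Elem := ((('I_m0 * 'I_m0) * bool) * bool)%type.
Definition ei (x : Elem) := x.1.1.1.
Definition ej (x : Elem) := x.1.1.2.
Definition ea (x : Elem) := x.1.2.
Definition eb (x : Elem) := x.2.
Definition consis (x y : Elem) : bool :=
 [&& (ei x == ei y) ==> (ea x == ea y), (ei x == ej y) ==> (ea x == eb y),
     (ej x == ei y) ==> (eb x == ea y) & (ej x == ej y) ==> (eb x == eb y)].
Definition conflict x y := (x != y) && ~~ consis x y.
Definition Vt := (Elem * bool)%type.
Definition e0 (u v : Vt) := (u.2 != v.2) && ((u.1 == v.1) || conflict u.1 v.1).
Definition NN := #|{: Vt}|.
Definition eG : rel 'I_NN := fun i j => e0 (enum_val i) (enum_val j).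

Lemma consis_sym x y : consis x y = consis y x.
Proof.
rewrite /consis [ei y == ei x]eq_sym [ea y == ea x]eq_sym [ei y == ej x]eq_sym [eb y == ea x]eq_sym.
rewrite [ej y == ei x]eq_sym [ea y == eb x]eq_sym [ej y == ej x]eq_sym [eb y == eb x]eq_sym.
by congr (_ && _); rewrite andbCA.
Qed.

Lemma eG_sym : symmetric eG.
Proof.
move=> i j; rewrite /eG /e0 /conflict [(enum_val i).2 == _]eq_sym [(enum_val i).1 == _]eq_sym.
by rewrite consis_sym.
Qed.

Lemma eG_irr : irreflexive eG.
Proof. by move=> i; rewrite /eG /e0 eqxx. Qed.

Lemma eG_bip : bipartite eG.
Proof. by exists (fun i => (enum_val i).2) => i j /andP[]. Qed.

Definition EEset (x : Elem) : {set 'I_NN} := [set enum_rank (x, false); enum_rank (x, true)].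

Lemma mem_EE u x : (u \in EEset x) = ((enum_val u).1 == x).
Proof.
rewrite !inE -!(inj_eq enum_val_inj) !enum_rankK.
by case: (enum_val u) => y s; rewrite !xpair_eqE; case: s; rewrite ?andbT ?andbF ?orbF.
Qed.

Lemma rank_in_EE x s : enum_rank (x, s) \in EEset x.
Proof. by rewrite mem_EE enum_rankK. Qed.

Lemma EEproof x : edge_of eG (EEset x).
Proof.
apply/existsP; exists (enum_rank (x, false)); apply/existsP; exists (enum_rank (x, true)).
by rewrite /eG !enum_rankK /e0 /= eqxx /= eqxx.
Qed.

Definition EE x : edge_t eG := exist _ (EEset x) (EEproof x).

Lemma EEset_inj : injective EEset.
Proof.
move=> x y E; have := rank_in_EE x false; rewrite E mem_EE enum_rankK /=.
by move/eqP.
Qed.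

Lemma EE_inj : injective EE.
Proof. by move=> x y /(congr1 val) /= /EEset_inj. Qed.

Definition gx (a : {set 'I_m0}) (ij : 'I_m0 * 'I_m0) : Elem := ((ij, ij.1 \in a), ij.2 \in a).

Definition Sa (a : {set 'I_m0}) : {set edge_t eG} := [set EE (gx a ij) | ij : 'I_m0 * 'I_m0].

Definition consa (a : {set 'I_m0}) x := (ea x == (ei x \in a)) && (eb x == (ej x \in a)).

Lemma consa_gx a ij : consa a (gx a ij).
Proof. by rewrite /consa /= !eqxx. Qed.

Lemma consa_consis a x y : consa a x -> consa a y -> consis x y.
Proof.
move=> /andP[/eqP ax /eqP bx] /andP[/eqP ay /eqP b_y].
rewrite /consis ax bx ay b_y.
by apply/and4P; split; apply/implyP => /eqP ->.
Qed.

Lemma consa_eq a x : consa a x -> x = gx a (ei x, ej x).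
Proof.
by case: x => [[[i j] al] be]; rewrite /consa /ea /eb /ei /ej /= => /andP[/eqP -> /eqP ->].
Qed.

Lemma im_noedge (M : {set edge_t eG}) A B u v : induced_matching M -> A \in M -> B \in M ->
  A != B -> u \in val A -> v \in val B -> ~~ eG u v.
Proof.
move=> /forallP /(_ A) /implyP /(_ _) H AM BM; move: (H AM) => /forallP /(_ B) /implyP /(_ BM).
move=> /implyP H' nAB uA vB; move: (H' nAB) => /andP[_ /forallP /(_ u) /implyP /(_ uA)].
by move=> /forallP /(_ v) /implyP /(_ vB).
Qed.

Lemma induced_Sa a : induced_matching (Sa a).
Proof.
apply/forallP => A; apply/implyP => /imsetP[ij _ ->].
apply/forallP => B; apply/implyP => /imsetP[ij' _ ->].
apply/implyP => neq.
have nxy : gx a ij != gx a ij' by apply: contra neq => /eqP ->.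
apply/andP; split.
  rewrite -setI_eq0; apply/eqP/setP => u; rewrite in_setI in_set0 /= !mem_EE.
  by apply/negbTE/negP => /andP[/eqP -> /eqP E]; move/eqP: nxy.
apply/forallP => u; apply/implyP; rewrite /= mem_EE => /eqP ux.
apply/forallP => v; apply/implyP; rewrite /= mem_EE => /eqP vy.
rewrite /eG /e0 ux vy negb_and; apply/orP; right; rewrite negb_or (negPf nxy) /=.
by rewrite /conflict negb_and negbK (consa_consis (consa_gx a ij) (consa_gx a ij')) orbT.
Qed.

Definition assigns x i v := ((ei x == i) && (ea x == v)) || ((ej x == i) && (eb x == v)).

Lemma assigns_consis x y i v w : assigns x i v -> assigns y i w -> consis x y -> v = w.
Proof.
move=> /orP[/andP[/eqP xi /eqP xv]|/andP[/eqP xi /eqP xv]] /orP[/andP[/eqP yi /eqP yw]|/andP[/eqP yi /eqP yw]];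
  case/and4P => c1 c2 c3 c4.
- by move: c1; rewrite xi yi eqxx xv yw => /eqP.
- by move: c2; rewrite xi yi eqxx xv yw => /eqP.
- by move: c3; rewrite xi yi eqxx xv yw => /eqP.
- by move: c4; rewrite xi yi eqxx xv yw => /eqP.
Qed.

End Graph.

Section Real.
Variable R : realFieldType.
Variable m0 : nat.
Local Open Scope ring_scope.

Definition cxn (b : {set 'I_m0}) (x : Elem m0) : nat :=
  if consis x x then (2 - ((ei x == ej x) && (ei x \in b) && ~~ ea x)
     - ((ei x != ej x) && (ei x \in b) && (ej x \in b) && ea x && eb x))%N else 0%N.

Definition cE b (A : edge_t (@eG m0)) : R :=
  if [pick x | val A == EEset x] is Some x then (cxn b x)%:R else 0.

Lemma cE_EE b x : cE b (EE x) = (cxn b x)%:R.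
Proof.
rewrite /cE; case: pickP => [y /eqP /EEset_inj -> //|/(_ x)].
by rewrite /= eqxx.
Qed.

Lemma cE_ge0 b A : 0 <= cE b A.
Proof. by rewrite /cE; case: pickP => [y _|_]; rewrite ?ler0n. Qed.

Definition Xv a : edge_t (@eG m0) -> R := fun A => if A \in Sa a then 1 else 0.

Lemma Q_Xv a : @induced_matching_polytope R _ (@eG m0) (Xv a).
Proof.
exists (fun M => (M == Sa a)%:R); split.
- by move=> M; rewrite ler0n.
- by move=> M; case: eqP => // -> ; rewrite induced_Sa.
- by rewrite (bigD1 (Sa a)) //= eqxx big1 ?addr0 // => M /negPf ->.
move=> d; rewrite (bigD1 (Sa a)) //= eqxx mul1r big1 ?addr0 // => M /negPf ->.
by rewrite mul0r.
Qed.

Lemma lin_Xv b a : lin (cE b) (Xv a) = (\sum_i \sum_j cxn b (gx a (i, j)))%:R.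
Proof.
rewrite /lin /Xv.
rewrite (eq_bigr (fun A => if A \in Sa a then cE b A else 0)); last first.
  by move=> A _; case: ifP; rewrite ?mulr1 ?mulr0.
rewrite -big_mkcond /Sa big_imset /=; last first.
  move=> ij ij' _ _ /EE_inj; rewrite /gx => -[] /= ->; by [].
rewrite pair_big natr_sum; apply: eq_bigr => -[i j] _ /=.
by rewrite cE_EE.
Qed.


Lemma sum_bool (I : finType) (P : pred I) : (\sum_i (P i : nat))%N = #|P|.
Proof. by rewrite -sum1_card [RHS]big_mkcond /=; apply: eq_bigr => i _; rewrite unfold_in; case: (P i). Qed.

Lemma count_V b a :
  (\sum_i \sum_j cxn b (gx a (i, j)) + #|b :\: a| + #|a :&: b| * (#|a :&: b| - 1) = 2 * (m0 * m0))%N.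
Proof.
pose t1 := fun i j : 'I_m0 => ((i == j) && (i \in b) && (i \notin a) : nat).
pose t2 := fun i j : 'I_m0 => ((i != j) && (i \in b) && (j \in b) && (i \in a) && (j \in a) : nat).
have pt : forall i j, (cxn b (gx a (i, j)) + t1 i j + t2 i j = 2)%N.
  move=> i j; rewrite /cxn (consa_consis (consa_gx a (i,j)) (consa_gx a (i,j))) /t1 /t2.
  rewrite /ei /ej /ea /eb /=.
  case: eqP => [->|_] /=; rewrite ?andbF ?andFb ?subn0 ?addn0 //.
    by case: (j \in b); case: (j \in a).
  by case: (i \in b); case: (j \in b); case: (i \in a); case: (j \in a).
have S1 : (\sum_i \sum_j t1 i j = #|b :\: a|)%N.
  rewrite (_ : #|b :\: a| = #|[pred i | (i \in b) && (i \notin a)]|); last first.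
    by apply: eq_card => i; rewrite !inE andbC.
  rewrite -sum_bool; apply: eq_bigr => i _.
  rewrite (bigD1 i) //= big1 ?addn0; first by rewrite /t1 eqxx.
  by move=> j /negPf nj; rewrite /t1 eq_sym nj.
have S2 : (\sum_i \sum_j t2 i j = #|a :&: b| * (#|a :&: b| - 1))%N.
  have -> : (#|a :&: b| * (#|a :&: b| - 1) = \sum_i ((i \in a :&: b) * (#|a :&: b| - 1)))%N.
    rewrite -big_distrl /= sum_bool; congr (_ * _)%N; by apply: eq_card.
  apply: eq_bigr => i _.
  case: (boolP (i \in a :&: b)) => iab; last first.
    apply: big1 => j _; rewrite /t2; move: iab; rewrite !inE.
    by case: (i \in a); case: (i \in b); rewrite ?andbF.
  rewrite /= mul1n (cardsD1 i (a :&: b)) iab add1n subn1 /=.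
  rewrite (_ : #|(a :&: b) :\ i| = #|[pred j | j \in (a :&: b) :\ i]|) ?(eq_card (fun _ => erefl)) // -sum_bool.
  apply: eq_bigr => j _; rewrite /t2 !inE; move: iab; rewrite !inE => /andP[-> ->].
  by rewrite !andbT [j == i]eq_sym; case: (i != j); case: (j \in a); case: (j \in b).
rewrite -S1 -S2 -!big_split /=.
rewrite (eq_bigr (fun _ => 2 * m0)%N); last first.
  move=> i _; rewrite -!big_split /= (eq_bigr (fun _ => 2%N)).
    by rewrite sum_nat_const card_ord mulnC.
  by move=> j _; rewrite pt.
by rewrite sum_nat_const card_ord mulnCA.
Qed.


Definition aM (M : {set edge_t (@eG m0)}) : {set 'I_m0} :=
  [set i | [exists A in M, [exists x, (val A == EEset x) && consis x x && assigns x i true]]].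

Lemma assign_ok M A x i v : induced_matching M -> A \in M -> val A = EEset x ->
  consis x x -> assigns x i v -> (i \in aM M) = v.
Proof.
move=> iM AM vA cx ax; case: v ax => ax.
  rewrite inE; apply/existsP; exists A; rewrite AM /=; apply/existsP; exists x.
  by rewrite vA eqxx cx ax.
apply/negbTE/negP; rewrite inE => /existsP[A' /andP[A'M /existsP[y /andP[/andP[/eqP vA' cy] ay]]]].
case: (eqVneq A A') => [eAA|nAA].
  move: vA'; rewrite -eAA vA => /EEset_inj eyx.
  by move: ay; rewrite -eyx => ay; have := assigns_consis ax ay cx.
have := im_noedge iM AM A'M nAA (u := enum_rank (x, false)) (v := enum_rank (y, true)).
rewrite vA vA' !rank_in_EE => /(_ isT isT).
rewrite /eG /e0 !enum_rankK /= negb_or => /andP[nxy]; rewrite /conflict nxy /= negbK => cxy.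
by have := assigns_consis ax ay cxy.
Qed.

Lemma valid_M b M : induced_matching M ->
  lin (cE b) (fun A => if A \in M then 1 else 0) <= lin (cE b) (Xv (aM M)).
Proof.
move=> iM; apply: ler_sum => A _; rewrite /Xv.
case: (boolP (A \in M)) => AM; last first.
  by rewrite mulr0; case: ifP; rewrite ?mulr1 ?mulr0 ?cE_ge0.
case: (boolP (A \in Sa (aM M))) => // nS; rewrite mulr1 mulr0.
rewrite /cE; case: pickP => [x /eqP vA|]; last by [].
rewrite /cxn; case: (boolP (consis x x)) => cx //.
exfalso; move/negP: nS; apply.
have ca : consa (aM M) x.
  apply/andP; split; apply/eqP; apply/esym; apply: (assign_ok iM AM vA cx); rewrite /assigns eqxx eqxx //.
  by rewrite orbT.
have -> : A = EE x by apply: val_inj.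
by rewrite (consa_eq ca); apply: imset_f.
Qed.

Definition betab (b : {set 'I_m0}) : R := (2 * (m0 * m0) + 1)%:R - #|b|%:R.

Lemma s_le (s : nat) : (s <= s * (s - 1) + 1)%N.
Proof. by case: s => [|s] //=; rewrite subn1 /=; nia. Qed.

Lemma lin_Xv_le b a : lin (cE b) (Xv a) <= betab b.
Proof.
rewrite lin_Xv /betab lerBrDr -natrD ler_nat.
have := count_V b a; have := cardsID a b; rewrite setIC.
have := s_le #|a :&: b|; move: (#|a :&: b| * (#|a :&: b| - 1))%N => t.
lia.
Qed.

Lemma lin_Xv_eq b a : #|a :&: b| = 1%N -> lin (cE b) (Xv a) = betab b.
Proof.
move=> s1; rewrite lin_Xv /betab; apply/eqP; rewrite eq_sym subr_eq -natrD eqr_nat.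
have := count_V b a; have := cardsID a b; rewrite setIC s1 /=.
move=> H1 H2; apply/eqP; lia.
Qed.

Lemma lin_Xv_lt (b a : {set 'I_m0}) : [disjoint a & b] -> lin (cE b) (Xv a) < betab b.
Proof.
move=> dab; have s0 : #|a :&: b| = 0%N by apply/eqP; rewrite cards_eq0 setI_eq0.
rewrite lin_Xv /betab ltrBrDr -natrD ltr_nat.
have := count_V b a; have := cardsID a b; rewrite setIC s0 /=.
lia.
Qed.

Lemma Hval_poly b x : @induced_matching_polytope R _ (@eG m0) x -> lin (cE b) x <= betab b.
Proof.
case=> w [w0 wJ w1 xw].
have -> : lin (cE b) x = \sum_M w M * lin (cE b) (fun A => if A \in M then 1 else 0).
  rewrite /lin; under eq_bigr => A _ do rewrite xw mulr_sumr.
  rewrite exchange_big /=; apply: eq_bigr => M _; rewrite mulr_sumr.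
  by apply: eq_bigr => A _; rewrite mulrCA.
apply: (@le_trans _ _ (\sum_M w M * betab b)); last by rewrite -mulr_suml w1 mul1r.
apply: ler_sum => M _.
case: (boolP (induced_matching M)) => iM; last by rewrite wJ // !mul0r.
apply: ler_wpM2l => //; apply: (le_trans (valid_M b iM)); exact: lin_Xv_le.
Qed.

End Real.

Section Card.
Variable m0 : nat.

Lemma card_NN : NN m0 = (8 * (m0 * m0))%N.
Proof. by rewrite /NN card_prod !card_prod !card_ord card_bool; lia. Qed.

Lemma card_edges : (#|{: edge_t (@eG m0)}| <= NN m0 * NN m0)%N.
Proof.
rewrite card_sig.
apply: (@leq_trans #|[set A : {set 'I_(NN m0)} | #|A| == 2]|).
  apply: subset_leq_card; apply/subsetP => A; rewrite !inE.
  move=> /existsP[u /existsP[v /andP[euv /eqP ->]]].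
  rewrite cards2; case: (eqVneq u v) => [uv|//]; by move: euv; rewrite uv eG_irr.
rewrite card_draws card_ord bin2 leq_half_double.
move: (NN m0) => n; nia.
Qed.

End Card.

Local Open Scope ring_scope.

Section Poly.
Variable R : realFieldType.
Variables k m : nat.
Variable p : 'I_m -> 'I_k -> R.

Definition liftv (x : 'I_k -> R) : 'rV[R]_(k.+1) :=
  \row_(j < k.+1) (if unlift ord0 j is Some j' then x j' else 1).

Lemma liftv0 x : liftv x 0 ord0 = 1.
Proof. by rewrite mxE unlift_none. Qed.

Lemma liftvS x j : liftv x 0 (lift ord0 j) = x j.
Proof. by rewrite mxE liftK. Qed.

Definition MJ (J : pred 'I_m) : 'M[R]_(m, k.+1) :=
  \matrix_(i, j) (if J i then liftv (p i) 0 j else 0).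

Lemma rowMJ J i : row i (MJ J) = if J i then liftv (p i) else 0.
Proof. by apply/rowP => j; rewrite !mxE; case: (J i) => //; rewrite mxE. Qed.

Lemma lift_conv (w : 'I_m -> R) x : \sum_i w i = 1 -> (forall d, x d = \sum_i w i * p i d) ->
  liftv x = \sum_i w i *: liftv (p i).
Proof.
move=> w1 xw; apply/rowP => j; rewrite summxE.
case: (unliftP ord0 j) => [j'|] ->.
  by rewrite liftvS xw; apply: eq_bigr => i _; rewrite mxE liftvS.
by rewrite liftv0 -w1; apply: eq_bigr => i _; rewrite mxE liftv0 mulr1.
Qed.

Lemma conv_sub J x : in_conv J p x -> (liftv x <= MJ J)%MS.
Proof.
case=> w [w0 wJ w1 xw]; rewrite (lift_conv w1 xw); apply: summx_sub => i _.
case: (boolP (J i)) => Ji; last by rewrite wJ // scale0r sub0mx.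
by apply: scalemx_sub; have := row_sub i (MJ J); rewrite rowMJ Ji.
Qed.

Definition ptmx r (q : 'I_r -> 'I_k -> R) : 'M[R]_(r, k.+1) := \matrix_(i, j) liftv (q i) 0 j.

Lemma row_ptmx r q i : row i (@ptmx r q) = liftv (q i).
Proof. by apply/rowP => j; rewrite !mxE. Qed.

Lemma aff_indepE r (q : 'I_r -> 'I_k -> R) : aff_indep q <-> row_free (ptmx q).
Proof.
have key : forall lam : 'I_r -> R, (\row_i lam i) *m ptmx q = 0 <->
   (\sum_i lam i = 0 /\ forall d, \sum_i lam i * q i d = 0).
  move=> lam; split.
    move/rowP => H; split.
      have E := H ord0; rewrite [RHS]mxE in E; rewrite -[RHS]E mxE.
      by apply: eq_bigr => i _; rewrite !mxE unlift_none mulr1.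
    move=> d; have E := H (lift ord0 d); rewrite [RHS]mxE in E; rewrite -[RHS]E mxE.
    by apply: eq_bigr => i _; rewrite !mxE liftK.
  case=> H0 H1; apply/rowP => j; rewrite !mxE.
  case: (unliftP ord0 j) => [j'|] ->.
    by rewrite -[RHS](H1 j'); apply: eq_bigr => i _; rewrite !mxE liftK.
  by rewrite -[RHS]H0; apply: eq_bigr => i _; rewrite !mxE unlift_none mulr1.
split.
  move=> Hq; apply: inj_row_free => v vq.
  have : (\row_i v 0 i) *m ptmx q = 0.
    by rewrite -vq; congr (_ *m _); apply/rowP => i; rewrite !mxE.
  case/key => H0 H1; apply/rowP => i; rewrite mxE.
  have:= Hq (fun i => v 0 i) H0 H1 i; by move=> ->.
move=> rf lam H0 H1 i.
have /(row_free_inj rf) : (\row_i lam i) *m ptmx q = 0 *m ptmx q.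
  by rewrite mul0mx; apply/key.
by move/rowP => /(_ i); rewrite !mxE.
Qed.


Lemma has_le J r : has_aff_indep (in_conv J p) r -> (r <= \rank (MJ J))%N.
Proof.
case=> q [Hq /aff_indepE rf]; rewrite -(eqP rf); apply: mxrankS.
by apply/row_subP => i; rewrite row_ptmx; apply: conv_sub.
Qed.

Lemma row_free_row_neq0 r n (A : 'M[R]_(r, n)) i : row_free A -> row i A != 0.
Proof.
move=> rf; apply/eqP => H.
have : delta_mx (0 : 'I_1) i *m A = 0 *m A by rewrite mul0mx -H rowE.
move/(row_free_inj rf)/matrixP => /(_ 0 i); rewrite !mxE !eqxx /=.
by move/eqP; rewrite oner_eq0.
Qed.

Lemma conv_vertex (J : pred 'I_m) i : J i -> in_conv J p (p i).
Proof.
move=> Ji; exists (fun j => (j == i)%:R); split.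
- by move=> j; rewrite ler0n.
- by move=> j Jj; case: eqP => // E; move: Jj; rewrite E Ji.
- by rewrite (bigD1 i) //= eqxx big1 ?addr0 // => j /negPf ->.
move=> d; rewrite (bigD1 i) //= eqxx mul1r big1 ?addr0 // => j /negPf ->.
by rewrite mul0r.
Qed.

Lemma has_rank J : has_aff_indep (in_conv J p) (\rank (MJ J)).
Proof.
pose F := maxrankfun (MJ J).
have rf := maxrowsub_free (MJ J).
have JF : forall i, J (F i).
  move=> i; apply/negPn/negP => nJ.
  by have := row_free_row_neq0 i rf; rewrite row_rowsub rowMJ (negPf nJ) eqxx.
exists (fun i => p (F i)); split; first by move=> i; apply: conv_vertex.
apply/aff_indepE; suff -> : ptmx (fun i => p (F i)) = rowsub F (MJ J) by [].
apply/row_matrixP => i; by rewrite row_ptmx row_rowsub rowMJ JF.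
Qed.

Lemma affrank_conv J : affrank (in_conv J p) (\rank (MJ J)).
Proof.
split; first exact: has_rank.
by move/has_le; rewrite ltnn.
Qed.


Definition slack (phi : 'cV[R]_(k.+1)) (x : 'I_k -> R) : R := (liftv x *m phi) 0 0.
Definition valid phi := forall i, 0 <= slack phi (p i).
Definition tight phi : pred 'I_m := fun i => slack phi (p i) == 0.

Lemma slack_conv phi (w : 'I_m -> R) x : \sum_i w i = 1 -> (forall d, x d = \sum_i w i * p i d) ->
  slack phi x = \sum_i w i * slack phi (p i).
Proof.
move=> w1 xw; rewrite /slack (lift_conv w1 xw) mulmx_suml summxE.
by apply: eq_bigr => i _; rewrite -scalemxAl mxE.
Qed.

Lemma face_conv phi x : valid phi ->
  (in_conv predT p x /\ slack phi x = 0) <-> in_conv (tight phi) p x.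
Proof.
move=> vphi; split.
  case=> -[w [w0 _ w1 xw]] sx; exists w; split => // i ti.
  have : \sum_i w i * slack phi (p i) = 0 by rewrite -(slack_conv phi w1 xw).
  move/eqP; rewrite psumr_eq0; last by move=> j _; apply: mulr_ge0.
  move/allP => /(_ i (mem_index_enum _)) /=; rewrite mulf_eq0 => /orP[/eqP //|].
  by move: ti; rewrite /tight => /negPf ->.
case=> w [w0 wJ w1 xw]; split; first by exists w; split.
rewrite (slack_conv phi w1 xw) big1 // => i _.
case: (boolP (tight phi i)) => [/eqP ->|/wJ ->]; by rewrite ?mulr0 ?mul0r.
Qed.

Lemma MJ_tight_mul phi : MJ (tight phi) *m phi = 0.
Proof.
apply/row_matrixP => i; rewrite row_mul rowMJ row0.
case: (boolP (tight phi i)) => [/eqP ti|_]; last by rewrite mul0mx.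
by apply/rowP => j; rewrite ord1 [RHS]mxE; exact: ti.

Qed.

Lemma sub_mul0 n1 n2 (U : 'M[R]_(n1, k.+1)) (v : 'M[R]_(n2, k.+1)) h :
  U *m h = 0 -> (v <= U)%MS -> v *m h = 0 :> 'cV_n2.
Proof. by move=> Uh /submxP[D ->]; rewrite -mulmxA Uh mulmx0. Qed.

Lemma MJ_mono (J J' : pred 'I_m) : (forall i, J i -> J' i) -> (MJ J <= MJ J')%MS.
Proof.
move=> JJ; apply/row_subP => i; rewrite rowMJ.
case: (boolP (J i)) => Ji; last exact: sub0mx.
by have := row_sub i (MJ J'); rewrite rowMJ (JJ _ Ji).
Qed.

Lemma functional_ex n1 (U : 'M[R]_(n1, k.+1)) (v : 'rV[R]_(k.+1)) :
  ~~ (v <= U)%MS -> exists psi : 'cV[R]_(k.+1), U *m psi = 0 /\ (v *m psi) 0 0 = 1.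
Proof.
rewrite submxE => /rV0Pn [j wj].
exists (((v *m cokermx U) 0 j)^-1 *: (cokermx U *m delta_mx j 0)); split.
  by rewrite scalemxAr mulmxA mulmx_coker mul0mx.
rewrite scalemxAr mulmxA -scalemxAr -colE mxE [X in _ * X]mxE mulVf //.
Qed.

Definition hv (h : 'cV[R]_(k.+1)) i := (liftv (p i) *m h) 0 0.

Lemma slackB phi h t x : slack (phi - t *: h) x = slack phi x - t * (liftv x *m h) 0 0.
Proof. by rewrite /slack mulmxBr -scalemxAr !mxE. Qed.

Lemma hv_tight phi h i : MJ (tight phi) *m h = 0 -> tight phi i -> hv h i = 0.
Proof.
move=> Mh ti; rewrite /hv.
have := row_sub i (MJ (tight phi)); rewrite rowMJ ti => /(sub_mul0 Mh) ->.
by rewrite mxE.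
Qed.

Lemma rotate phi h z : valid phi -> MJ (tight phi) *m h = 0 -> (exists i, 0 < hv h i) ->
  0 < slack phi z -> (liftv z *m h) 0 0 <= 0 ->
  exists psi, [/\ valid psi, (forall i, tight phi i -> tight psi i), 0 < slack psi z &
     (\rank (MJ (tight phi)) < \rank (MJ (tight psi)))%N].
Proof.
move=> vphi Mh [i0 hi0] sz hz.
pose P := fun i => 0 < hv h i.
pose F := fun i => slack phi (p i) / hv h i.
have [ip Pip minF] : extremum_spec <=%O P F (Order.arg_min i0 P F) by apply: arg_minP.
pose t := F ip.
have t0 : 0 <= t by apply: divr_ge0 => //; apply: ltW.
exists (phi - t *: h); split.
- move=> i; rewrite slackB subr_ge0.
  case: (ltrP 0 (hv h i)) => hi.
    by have := minF i hi; rewrite -/t /F ler_pdivlMr.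
  by apply: le_trans (vphi i); apply: mulr_ge0_le0.
- move=> i ti; rewrite /tight slackB; move/eqP: (ti) => ->.
  by have := hv_tight Mh ti; rewrite /hv => ->; rewrite mulr0 subr0.
- by rewrite slackB; apply: (lt_le_trans sz); rewrite -subr_ge0 addrAC subrr add0r oppr_ge0; apply: mulr_ge0_le0.
apply: rank_ltmx; rewrite ltmxE MJ_mono /=; last first.
  move=> i ti; rewrite /tight slackB; move/eqP: (ti) => ->.
  by have := hv_tight Mh ti; rewrite /hv => ->; rewrite mulr0 subr0.
apply/negP => sub.
have tip : tight (phi - t *: h) ip.
  by rewrite /tight slackB /t /F -/(hv h ip) divfK ?subrr // gt_eqF.
have := row_sub ip (MJ (tight (phi - t *: h))); rewrite rowMJ tip => /submx_trans /(_ sub).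
by move/(sub_mul0 Mh) => /matrixP /(_ 0 0) E; move: Pip; rewrite /P /hv E mxE ltxx.
Qed.


Lemma rank_col_le n1 (A : 'M[R]_(n1, k.+1)) (v : 'rV[R]_(k.+1)) :
  (\rank (col_mx A v) <= (\rank A).+1)%N.
Proof.
rewrite -(addsmxE A v).
apply: leq_trans (mxrank_adds_leqif A v).1 _.
by apply: leq_trans (leq_add (leqnn _) (rank_leq_row v)) _; rewrite addn1.
Qed.

Lemma tight_lt phi z : valid phi -> in_conv predT p z -> 0 < slack phi z ->
  (\rank (MJ (tight phi)) < \rank (MJ predT))%N.
Proof.
move=> vphi [w [w0 _ w1 xw]] sz.
have [i ti] : exists i, ~~ tight phi i.
  apply/existsP; apply: contraLR sz; rewrite negb_exists => /forallP H.
  rewrite -leNgt (slack_conv phi w1 xw) big1 // => i _.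
  by move: (H i); rewrite negbK => /eqP ->; rewrite mulr0.
apply: rank_ltmx; rewrite ltmxE MJ_mono //=.
apply/negP => sub.
have := row_sub i (MJ predT); rewrite rowMJ /= => /submx_trans /(_ sub).
move/(sub_mul0 (MJ_tight_mul phi)) => /matrixP /(_ 0 0) E.
by move: ti; rewrite /tight /slack E mxE eqxx.
Qed.

Lemma entry0 (A B : 'M[R]_(1,1)) c : (A - c *: B) 0 0 = A 0 0 - c * B 0 0.
Proof. by rewrite !mxE. Qed.

Lemma FL_aux n : forall phi z, (\rank (MJ predT) - \rank (MJ (tight phi)) <= n)%N ->
  valid phi -> in_conv predT p z -> 0 < slack phi z ->
  exists psi, [/\ valid psi, (forall i, tight phi i -> tight psi i), 0 < slack psi z &
     (\rank (MJ (tight psi))).+1 = \rank (MJ predT)].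
Proof.
elim: n => [|n IH] phi z hn vphi cz sz; have lt := tight_lt vphi cz sz.
  by move: hn; rewrite leqn0 subn_eq0 leqNgt lt.
case: (eqVneq (\rank (MJ (tight phi))).+1 (\rank (MJ predT))) => [E|NE].
  by exists phi; split.
have lt2 : ((\rank (MJ (tight phi))).+2 <= \rank (MJ predT))%N.
  by rewrite ltn_neqAle NE lt.
set M := MJ (tight phi).
have [j1 nj1] : exists j1, ~~ (liftv (p j1) <= M)%MS.
  apply/existsP; apply: contraLR lt2; rewrite negb_exists => /forallP H.
  rewrite -ltnNge ltnS; apply: leqW; apply: mxrankS; apply/row_subP => i.
  by rewrite rowMJ /=; move: (H i); rewrite negbK.
have [j2 nj2] : exists j2, ~~ (liftv (p j2) <= col_mx M (liftv (p j1)))%MS.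
  apply/existsP; apply: contraLR lt2; rewrite negb_exists => /forallP H.
  rewrite -ltnNge ltnS; apply: leq_trans (rank_col_le M (liftv (p j1))).
  apply: mxrankS; apply/row_subP => i.
  by rewrite rowMJ /=; move: (H i); rewrite negbK.
have [psi1 [M1 v1]] := functional_ex nj1.
have [psi2 [M2 v2]] := functional_ex nj2.
move: M2; rewrite mul_col_mx => /eqP; rewrite col_mx_eq0 => /andP[/eqP M2 /eqP v12].
pose a := (liftv (p j2) *m psi1) 0 0.
pose h := psi1 - (a + 1) *: psi2.
have Mh : M *m h = 0 by rewrite /h mulmxBr -scalemxAr M1 M2 scaler0 subr0.
have hv1 : hv h j1 = 1.
  by rewrite /hv /h mulmxBr -scalemxAr v12 scaler0 subr0.
have hv2 : hv h j2 = -1.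
  rewrite /hv /h mulmxBr -scalemxAr entry0 v2 mulr1 -/a.
  by rewrite opprD addrA subrr sub0r.
suff [psi [vpsi tpsi spsi rpsi]] : exists psi, [/\ valid psi, (forall i, tight phi i -> tight psi i), 0 < slack psi z &
     (\rank (MJ (tight phi)) < \rank (MJ (tight psi)))%N].
  have hn' : (\rank (MJ predT) - \rank (MJ (tight psi)) <= n)%N.
    rewrite -ltnS; apply: leq_trans hn.
    by have := tight_lt vpsi cz spsi; move: rpsi; lia.
  have [psi' [v' t' s' r']] := IH psi z hn' vpsi cz spsi.
  by exists psi'; split => // i /tpsi /t'.
case: (lerP ((liftv z *m h) 0 0) 0) => hz.
  by apply: (@rotate phi h z) => //; exists j1; rewrite hv1 ltr01.
apply: (@rotate phi (- h) z) => //.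
- by rewrite mulmxN Mh oppr0.
- by exists j2; rewrite /hv mulmxN mxE -/(hv h j2) hv2 opprK ltr01.
by rewrite mulmxN mxE oppr_le0 ltW.
Qed.


Lemma slackE psi x : slack psi x = psi ord0 0 - lin (fun j => - psi (lift ord0 j) 0) x.
Proof.
rewrite /slack mxE big_ord_recl liftv0 mul1r /lin -sumrN.
congr (_ + _); apply: eq_bigr => j _; by rewrite liftvS mulNr opprK mulrC.
Qed.

Definition phi_of (a : 'I_k -> R) (b : R) : 'cV[R]_(k.+1) :=
  \col_j (if unlift ord0 j is Some j' then - a j' else b).

Lemma slack_phi_of a b x : slack (phi_of a b) x = b - lin a x.
Proof.
rewrite slackE !mxE unlift_none; congr (_ - _); apply: eq_bigr => j _.
by rewrite !mxE liftK opprK.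
Qed.

Lemma in_conv_mono (J J' : pred 'I_m) x : (forall i, J i -> J' i) -> in_conv J p x -> in_conv J' p x.
Proof.
move=> JJ [w [w0 wJ w1 xw]]; exists w; split => // i nJ'.
by apply: wJ; apply: contra nJ' => /JJ.
Qed.

Lemma slack_ge0 phi x : valid phi -> in_conv predT p x -> 0 <= slack phi x.
Proof.
move=> vphi [w [w0 _ w1 xw]]; rewrite (slack_conv phi w1 xw).
by apply: sumr_ge0 => i _; apply: mulr_ge0.
Qed.

Lemma affrank_ext (S S' : ('I_k -> R) -> Prop) r : (forall x, S x <-> S' x) -> affrank S r -> affrank S' r.
Proof.
move=> E [[q [Sq iq]] nh]; split.
  by exists q; split => // i; apply/E.
by case=> q2 [Sq2 iq2]; apply: nh; exists q2; split => // i; apply/E.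
Qed.

Lemma FL_facet (G : ('I_k -> R) -> Prop) z :
  is_face (in_conv predT p) G -> in_conv predT p z -> ~ G z ->
  exists F, [/\ is_facet (in_conv predT p) F, (forall y, G y -> F y) & ~ F z].
Proof.
case=> a [b [va EG]] cz nGz.
pose phi := phi_of a b.
have vphi : valid phi.
  move=> i; rewrite slack_phi_of subr_ge0; apply: va; exact: conv_vertex.
have sz : 0 < slack phi z.
  rewrite lt_neqAle slack_ge0 // andbT eq_sym; apply/eqP => E; apply: nGz.
  by apply/EG; split => //; move: E; rewrite slack_phi_of => /eqP; rewrite subr_eq0 => /eqP.
have [psi [vpsi tpsi spsi rpsi]] := FL_aux (leqnn _) vphi cz sz.
pose a' := fun j => - psi (lift ord0 j) 0.
pose b' := psi ord0 0.
pose F := fun y => in_conv predT p y /\ lin a' y = b'.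
have EF : forall y, F y <-> in_conv (tight psi) p y.
  move=> y; rewrite -face_conv //; rewrite /F slackE -/a' -/b'.
  split => -[cy E]; split => //; first by rewrite E subrr.
  by apply/eqP; rewrite eq_sym -subr_eq0 E.
exists F; split.
- split.
    exists a', b'; split => //.
    by move=> x cx; have := slack_ge0 vpsi cx; rewrite slackE subr_ge0.
  exists (\rank (MJ (tight psi))); split; first by rewrite rpsi; apply: affrank_conv.
  by apply: (affrank_ext (S := in_conv (tight psi) p)) => [y|]; [rewrite EF|apply: affrank_conv].
- move=> y /EG [cy ey]; apply/EF; apply: (in_conv_mono tpsi); apply/face_conv => //.
  by split => //; rewrite slack_phi_of ey subrr.
move/EF/face_conv => /(_ vpsi) [_ E]; by move: spsi; rewrite E ltxx.
Qed.

End Poly.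

Section Rect.
Variable R : realFieldType.
Variable D : finType.
Variable Q : (D -> R) -> Prop.
Variable m0 : nat.
Variable X : {set 'I_m0} -> D -> R.
Variable l : {set 'I_m0} -> D -> R.
Variable beta : {set 'I_m0} -> R.
Hypothesis HX : forall a, Q (X a).
Hypothesis Hval : forall b x, Q x -> lin (l b) x <= beta b.
Hypothesis H1 : forall a b, #|a :&: b| = 1%N -> lin (l b) (X a) = beta b.
Hypothesis H0 : forall a b : {set 'I_m0}, [disjoint a & b] -> lin (l b) (X a) < beta b.

Lemma rect_bound k m (p : 'I_m -> 'I_k -> R) (c : D -> 'I_k -> R)
    (L : seq (('I_k -> R) -> Prop)) :
    (forall x, Q x <-> exists y, in_conv predT p y /\
                                 forall d, x d = \sum_j c d j * y j) ->
    (forall F, is_facet (in_conv predT p) F ->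
       exists i, (i < size L)%N /\ forall y, F y <-> nth (fun _ => False) L i y) ->
    (3 ^ m0 <= size L * 2 ^ m0)%N.
Proof.
move=> HQ HL.
have /fin_all_exists [yf Hy] : forall a : {set 'I_m0}, exists y : 'I_k -> R,
    in_conv predT p y /\ forall d, X a d = \sum_j c d j * y j.
  by move=> a; apply/HQ.
pose ab b := fun j => \sum_d l b d * c d j.
have linab : forall b y, lin (ab b) y = lin (l b) (fun d => \sum_j c d j * y j).
  move=> b y; rewrite /lin /ab.
  under eq_bigr => j _ do rewrite mulr_suml.
  rewrite exchange_big /=; apply: eq_bigr => d _; rewrite mulr_sumr.
  by apply: eq_bigr => j _; rewrite mulrA.
pose G b := fun y => in_conv predT p y /\ lin (ab b) y = beta b.
have faceG : forall b, is_face (in_conv predT p) (G b).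
  move=> b; exists (ab b), (beta b); split => // x cx.
  by rewrite linab; apply: Hval; apply/HQ; exists x.
have linya : forall a b, lin (ab b) (yf a) = lin (l b) (X a).
  move=> a b; rewrite linab /lin; apply: eq_bigr => d _.
  by case: (Hy a) => _ ->.
have /fin_all_exists [rho Hrho] : forall ab0 : {set 'I_m0} * {set 'I_m0}, exists r : nat,
    [disjoint ab0.1 & ab0.2] -> [/\ (r < size L)%N,
       ~ nth (fun _ => False) L r (yf ab0.1) &
       forall y, G ab0.2 y -> nth (fun _ => False) L r y].
  move=> -[a b] /=.
  case: (boolP [disjoint a & b]) => [dab|_]; last by exists 0%N.
  have [F [fF GF nF]] : exists F, [/\ is_facet (in_conv predT p) F,
      (forall y, G b y -> F y) & ~ F (yf a)].
    apply: FL_facet => //; first by case: (Hy a).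
    case=> _; rewrite linya => E; by move: (H0 dab); rewrite E ltxx.
  have [i [iL Fi]] := HL F fF.
  exists i => _; split => //; first by move/Fi.
  by move=> y /GF /Fi.
pose Ai (i : nat) := fun a : {set 'I_m0} => [exists b : {set 'I_m0}, [disjoint a & b] && (rho (a, b) == i)].
pose Bi (i : nat) := fun b : {set 'I_m0} => [exists a : {set 'I_m0}, [disjoint a & b] && (rho (a, b) == i)].
have KWi : forall i : 'I_(size L), (Dc (Ai i) (Bi i) <= 2 ^ m0)%N.
  move=> i; apply: (@KW_bound _ _ setT); rewrite ?cardsT ?card_ord ?subsetT //.
  move=> a b /existsP[b' /andP[d1 /eqP r1]] /existsP[a' /andP[d2 /eqP r2]].
  apply/eqP => cab.
  have [_ nA _] := Hrho (a, b') d1.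
  have [_ _ gB] := Hrho (a', b) d2.
  apply: nA; rewrite /= r1 -r2; apply: gB; split; first by case: (Hy a).
  by rewrite linya; apply: H1.
have <- : Dc (fun a => a \subset [set: 'I_m0]) (fun b => b \subset [set: 'I_m0]) = (3 ^ m0)%N.
  by apply: Dc_full; rewrite cardsT card_ord.
apply: (@leq_trans (\sum_(i < size L) Dc (Ai i) (Bi i))); last first.
  rewrite -[X in (_ <= X * _)%N]card_ord -sum_nat_const; apply: leq_sum => i _; exact: KWi.
rewrite /Dc [X in (_ <= X)%N]exchange_big /=; apply: leq_sum => a _.
rewrite [X in (_ <= X)%N]exchange_big /=; apply: leq_sum => b _.
rewrite !subsetT /=; case: (boolP [disjoint a & b]) => // dab.
have [rL _ _] := Hrho (a, b) dab.
rewrite (bigD1 (Ordinal rL)) //= -[X in (X <= _)%N]addn0 leq_add //.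
rewrite /Ai /Bi andbT lt0b; apply/andP; split; apply/existsP.
  by exists b; rewrite dab eqxx.
by exists a; rewrite dab eqxx.
Qed.

End Rect.
Lemma max_exists (n : nat) : exists K, (1024 * K ^ 4 <= n)%N /\ forall k, (1024 * k ^ 4 <= n)%N -> (k <= K)%N.
Proof.
have ex : exists k, (1024 * k ^ 4 <= n)%N by exists 0%N.
have bnd : forall k, (1024 * k ^ 4 <= n)%N -> (k <= n)%N.
  move=> k hk; apply: leq_trans hk; case: k => // k; nia.
case: (ex_maxnP ex bnd) => K PK maxK; by exists K.
Qed.

Lemma exp_89 K : (8 ^ K <= 9 ^ K)%N.
Proof. by elim: K => // K IH; rewrite !expnS leq_mul. Qed.

Unset Implicit Arguments.

Theorem theorem3 (R : realFieldType) :
  exists (C : nat) (c : R) (n0 : nat), 0 < c /\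
    forall n : nat, (n0 <= n)%N ->
      exists (N : nat) (e : rel 'I_N),
        [/\ symmetric e, irreflexive e & bipartite e] /\
        [/\ (N <= C * n)%N, (#|{: edge_t e}| <= C * n)%N &
            forall k : nat, (k%:R : R) ^+ 4 <= c * n%:R ->
              xc_ge (@induced_matching_polytope R _ e) (2 ^ k)%N].
Proof.
exists 1%N, (1024%:R)^-1, 0%N; split; first by rewrite invr_gt0 ltr0n.
move=> n _.
have [K [HK maxK]] := max_exists n.
pose m0 := (2 * K)%N.
exists (NN m0), (@eG m0); split; first by split; [exact: eG_sym|exact: eG_irr|exact: eG_bip].
split.
- rewrite card_NN mul1n /m0; apply: leq_trans HK; nia.
- rewrite mul1n; apply: leq_trans (card_edges m0) _; rewrite card_NN /m0; apply: leq_trans HK; nia.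
move=> k hk.
have hk' : (1024 * k ^ 4 <= n)%N.
  move: hk; rewrite mulrC ler_pdivlMr ?ltr0n // -natrX -natrM ler_nat mulnC //.
have kK := maxK k hk'.
move=> kk mm p c L HQ HL.
have := @rect_bound R _ _ m0 _ _ _ (@Q_Xv R m0) (@Hval_poly R m0) (fun a b => @lin_Xv_eq R m0 b a) (fun a b => @lin_Xv_lt R m0 b a) _ _ p c L HQ HL.
rewrite /m0 !expnM /= => H.
apply: (@leq_trans (2 ^ K)); first by rewrite leq_exp2l.
have : (2 ^ K * 4 ^ K <= size L * 4 ^ K)%N.
  by rewrite -expnMn; apply: leq_trans (exp_89 K) _; apply: leq_trans H.
by rewrite leq_pmul2r // expn_gt0.
Qed.
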